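(* Assume (A1) and (A2), and let $\bar X\in\mathcal{X}_\star$, $\bar S\in\mathcal{S}_\star$, $G\in\mathbb{S}^n$ and $\epsilon\ge0$. (1) If $\|\mathcal{P}G\|_F\le\epsilon$ and $\langle G,\bar S\rangle=0$, then $|\langle G,S\rangle|\le\|S-\bar S\|_F\,\epsilon$ for all $S\in\mathcal{S}_\star$. (2) If $\|\mathcal{P}^\perp G\|_F\le\epsilon$ and $\langle G,\bar X\rangle=0$, then $|\langle G,X\rangle|\le\|X-\bar X\|_F\,\epsilon$ for all $X\in\mathcal{X}_\star$.
   Context: Notation: $\mathbb{S}^n$ is the space of real symmetric $n\times n$ matrices with $\langle A,B\rangle=\mathrm{tr}(AB)$ and Frobenius norm $\|\cdot\|_F$. SDP data $C,A_1,\dots,A_m\in\mathbb{S}^n$, $b\in\mathbb{R}^m$ define $\mathcal{A}X:=(\langle A_i,X\rangle)_i$ and $\mathcal{A}^*y:=\sum_iy_iA_i$. A KKT point is $(X,y,S)$ with $\mathcal{A}X=b$, $\mathcal{A}^*y+S=C$, $X,S\succeq0$, $\langle X,S\rangle=0$. $\mathcal{X}_\star$, $\mathcal{S}_\star$ are the sets of $X$, resp. $S$, in KKT points. (A1) $\mathcal{A}$ is surjective. (A2) Some KKT point $(X_{sc},y_{sc},S_{sc})$ has $\mathrm{rank}X_{sc}+\mathrm{rank}S_{sc}=n$. $\mathcal{P}:=\mathcal{A}^*(\mathcal{A}\mathcal{A}^* )^{-1}\mathcal{A}$ and $\mathcal{P}^\perp:=\mathrm{Id}-\mathcal{P}$.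 *)

(* Defs.v *)
From HB Require Import structures.
From mathcomp Require Import all_boot all_order all_algebra.
Set Implicit Arguments. Unset Strict Implicit. Unset Printing Implicit Defensive.
Import Order.TTheory GRing.Theory Num.Theory.
Local Open Scope ring_scope.

Section SDP.
Variable R : rcfType.

Definition symmx n (A : 'M[R]_n) : Prop := A^T = A.

Definition psdmx n (A : 'M[R]_n) : Prop :=
  symmx A /\ forall x : 'cV[R]_n, 0 <= (x^T *m A *m x) 0 0.

Definition inner n (A B : 'M[R]_n) : R := \tr (A *m B).

Definition frob n (A : 'M[R]_n) : R := Num.sqrt (\tr (A^T *m A)).

Definition opA m n (As : 'I_m -> 'M[R]_n) (X : 'M[R]_n) : 'cV[R]_m :=
  \col_i inner (As i) X.

Definition opAt m n (As : 'I_m -> 'M[R]_n) (y : 'cV[R]_m) : 'M[R]_n :=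
  \sum_i y i 0 *: As i.

(* matrix of A Aadj : (A Aadj y) = gramA *m y *)
Definition gramA m n (As : 'I_m -> 'M[R]_n) : 'M[R]_m :=
  \matrix_(i, j) inner (As i) (As j).

Definition projP m n (As : 'I_m -> 'M[R]_n) (G : 'M[R]_n) : 'M[R]_n :=
  opAt As (invmx (gramA As) *m opA As G).

Definition projPperp m n (As : 'I_m -> 'M[R]_n) (G : 'M[R]_n) : 'M[R]_n :=
  G - projP As G.

(* (A1): A : S^n -> R^m is surjective *)
Definition opA_surj m n (As : 'I_m -> 'M[R]_n) : Prop :=
  forall v : 'cV[R]_m, exists X : 'M[R]_n, symmx X /\ opA As X = v.

Definition KKT m n (C : 'M[R]_n) (As : 'I_m -> 'M[R]_n) (b : 'cV[R]_m)
  (X : 'M[R]_n) (y : 'cV[R]_m) (S : 'M[R]_n) : Prop :=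
  [/\ opA As X = b, opAt As y + S = C, psdmx X, psdmx S & inner X S = 0].

Definition Xstar m n C (As : 'I_m -> 'M[R]_n) b (X : 'M[R]_n) : Prop :=
  exists y S, KKT C As b X y S.

Definition Sstar m n C (As : 'I_m -> 'M[R]_n) b (S : 'M[R]_n) : Prop :=
  exists X y, KKT C As b X y S.

(* (A2): strictly complementary KKT point *)
Definition strict_compl m n C (As : 'I_m -> 'M[R]_n) b : Prop :=
  exists X y S, KKT C As b X y S /\ (\rank X + \rank S)%N = n.

End SDP.

(* Main.v *)
Require Import Defs.
From HB Require Import structures.
From mathcomp Require Import all_boot all_order all_algebra.
From mathcomp Require Import ring lra.
Import Order.TTheory GRing.Theory Num.Theory.
Local Open Scope ring_scope.

Lemma cs_sum (R : rcfType) (I : finType) (a b : I -> R) :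
  (\sum_i a i * b i) ^+ 2 <= (\sum_i a i ^+ 2) * (\sum_i b i ^+ 2).
Proof.
have H0 : 0 <= \sum_i \sum_j (a i * b j - a j * b i) ^+ 2.
  by apply: sumr_ge0 => i _; apply: sumr_ge0 => j _; exact: sqr_ge0.
have E : \sum_i \sum_j (a i * b j - a j * b i) ^+ 2 =
   \sum_i \sum_j (a i ^+ 2 * b j ^+ 2) + \sum_i \sum_j (a j ^+ 2 * b i ^+ 2)
   - 2 * \sum_i \sum_j ((a i * b i) * (a j * b j)).
  rewrite mulr_sumr -big_split -sumrB /=; apply: eq_bigr => i _.
  rewrite mulr_sumr -big_split -sumrB /=; apply: eq_bigr => j _.
  ring.
have E1 : \sum_i \sum_j (a i ^+ 2 * b j ^+ 2) = (\sum_i a i ^+ 2) * (\sum_i b i ^+ 2).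
  by rewrite mulr_suml; apply: eq_bigr => i _; rewrite mulr_sumr.
have E2 : \sum_i \sum_j (a j ^+ 2 * b i ^+ 2) = (\sum_i a i ^+ 2) * (\sum_i b i ^+ 2).
  by rewrite mulrC mulr_suml; apply: eq_bigr => i _; rewrite mulr_sumr; apply: eq_bigr => j _; rewrite mulrC.
have E3 : \sum_i \sum_j ((a i * b i) * (a j * b j)) = (\sum_i a i * b i) ^+ 2.
  by rewrite expr2 mulr_suml; apply: eq_bigr => i _; rewrite mulr_sumr.
move: H0; rewrite E E1 E2 E3; lra.
Qed.

Lemma cs_sqrt (R : rcfType) (I : finType) (a b : I -> R) :
  `|\sum_i a i * b i| <= Num.sqrt (\sum_i a i ^+ 2) * Num.sqrt (\sum_i b i ^+ 2).
Proof.
rewrite -sqrtr_sqr -sqrtrM; last by apply: sumr_ge0 => i _; exact: sqr_ge0.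
exact/ler_wsqrtr/cs_sum.
Qed.

Lemma inner_sum (R : rcfType) n (A B : 'M[R]_n) :
  inner A B = \sum_i \sum_j A i j * B j i.
Proof. by rewrite /inner /mxtrace; apply: eq_bigr => i _; rewrite mxE. Qed.

Lemma cs_inner (R : rcfType) n (A B : 'M[R]_n) : symmx B ->
  `|inner A B| <= frob A * frob B.
Proof.
move=> sB.
have -> : inner A B = \sum_p A p.1 p.2 * B p.1 p.2.
  rewrite inner_sum (pair_bigA _ (fun i j => A i j * B j i)) /=; apply: eq_bigr => p _.
  by rewrite -[in B p.2 p.1]sB mxE.
have fE : forall M : 'M[R]_n, frob M = Num.sqrt (\sum_p M p.1 p.2 ^+ 2).
  move=> M; rewrite /frob -(pair_bigA _ (fun i j => M i j ^+ 2)) /= exchange_big /mxtrace /=.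
  congr Num.sqrt; apply: eq_bigr => j _; rewrite mxE; apply: eq_bigr => i _.
  by rewrite mxE expr2.
rewrite !fE; exact: cs_sqrt.
Qed.

Lemma innerC (R : rcfType) n (A B : 'M[R]_n) : inner A B = inner B A.
Proof. exact: mxtrace_mulC. Qed.

Lemma innerBr (R : rcfType) n (A B C : 'M[R]_n) : inner A (B - C) = inner A B - inner A C.
Proof. by rewrite /inner mulmxBr raddfB. Qed.

Lemma innerDl (R : rcfType) n (A B C : 'M[R]_n) : inner (A + B) C = inner A C + inner B C.
Proof. by rewrite /inner mulmxDl raddfD. Qed.

Lemma inner_opAt (R : rcfType) m n (As : 'I_m -> 'M[R]_n) y X :
  inner (opAt As y) X = \sum_i y i 0 * inner (As i) X.
Proof.
rewrite /inner /opAt mulmx_suml raddf_sum /=; apply: eq_bigr => i _.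
by rewrite -scalemxAl mxtraceZ.
Qed.

Lemma opAB (R : rcfType) m n (As : 'I_m -> 'M[R]_n) X Y :
  opA As (X - Y) = opA As X - opA As Y.
Proof. by apply/matrixP => i j; rewrite !mxE innerBr. Qed.

Lemma opAtB (R : rcfType) m n (As : 'I_m -> 'M[R]_n) y z :
  opAt As (y - z) = opAt As y - opAt As z.
Proof.
rewrite /opAt (eq_bigr (fun i => y i 0 *: As i - z i 0 *: As i)) ?sumrB // => i _.
by rewrite !mxE scalerBl.
Qed.

Lemma opA_opAt (R : rcfType) m n (As : 'I_m -> 'M[R]_n) y :
  opA As (opAt As y) = gramA As *m y.
Proof.
apply/matrixP => i j; rewrite !mxE (ord1 j) innerC inner_opAt.
by apply: eq_bigr => k _; rewrite mxE innerC mulrC.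
Qed.

Lemma symmx_opAt (R : rcfType) m n (As : 'I_m -> 'M[R]_n) y :
  (forall i, symmx (As i)) -> symmx (opAt As y).
Proof.
move=> sA; rewrite /symmx /opAt raddf_sum /=; apply: eq_bigr => i _.
by rewrite linearZ /= sA.
Qed.

Lemma inner_self0 (R : rcfType) n (M : 'M[R]_n) : symmx M -> inner M M = 0 -> M = 0.
Proof.
move=> sM H.
have H2 : \sum_p M p.1 p.2 ^+ 2 = 0.
  rewrite -[RHS]H inner_sum (pair_bigA _ (fun i j => M i j * M j i)) /=.
  apply: eq_bigr => p _. by rewrite -[in M p.2 p.1]sM mxE expr2.
apply/matrixP => i j; rewrite mxE.
have := @psumr_eq0P _ _ predT _ (fun p _ => sqr_ge0 (M p.1 p.2)) H2 (i, j) isT.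
by move/eqP; rewrite sqrf_eq0 => /eqP.
Qed.

Lemma gram_unit (R : rcfType) m n (As : 'I_m -> 'M[R]_n) :
  (forall i, symmx (As i)) -> opA_surj As -> gramA As \in unitmx.
Proof.
move=> sA surj; rewrite -row_free_unit -kermx_eq0.
have key : forall v : 'rV[R]_m, v *m gramA As = 0 -> v = 0.
  move=> v Hv.
  set M := opAt As v^T.
  have HM : inner M M = 0.
    rewrite inner_opAt.
    rewrite (eq_bigr (fun i => v 0 i * (v *m gramA As) 0 i)); first by rewrite Hv big1 // => i _; rewrite mxE mulr0.
    move=> i _; rewrite !mxE innerC inner_opAt; congr (_ * _); apply: eq_bigr => k _.
    by rewrite !mxE.
  have M0 : M = 0 by apply: inner_self0 => //; exact: symmx_opAt.
  have [X [_ HX]] := surj v^T.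
  have : inner M X = \sum_i v 0 i ^+ 2.
    rewrite inner_opAt; apply: eq_bigr => i _.
    have := congr1 (fun w : 'cV[R]_m => w i 0) HX; rewrite !mxE => ->; by rewrite expr2.
  rewrite M0 /inner mul0mx mxtrace0 => /esym H0.
  apply/matrixP => i j; rewrite (ord1 i) mxE.
  have := @psumr_eq0P _ _ predT _ (fun k _ => sqr_ge0 (v 0 k)) H0 j isT.
  by move/eqP; rewrite sqrf_eq0 => /eqP.
apply/eqP/row_matrixP => i; rewrite row0; apply: key.
have : (row i (kermx (gramA As)) <= kermx (gramA As))%MS by exact: row_sub.
by rewrite sub_kermx => /eqP.
Qed.

Lemma symmxB (R : rcfType) n (A B : 'M[R]_n) : symmx A -> symmx B -> symmx (A - B).
Proof. by rewrite /symmx => hA hB; rewrite linearB /= hA hB. Qed.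

Lemma frob_ge0 (R : rcfType) n (A : 'M[R]_n) : 0 <= frob A.
Proof. exact: sqrtr_ge0. Qed.

Theorem lemma4p3 (R : rcfType) (m n : nat) (C : 'M[R]_n) (As : 'I_m -> 'M[R]_n)
  (b : 'cV[R]_m) :
  symmx C -> (forall i, symmx (As i)) ->
  opA_surj As -> strict_compl C As b ->
  forall (Xb Sb G : 'M[R]_n) (eps : R),
  Xstar C As b Xb -> Sstar C As b Sb -> symmx G -> 0 <= eps ->
  (frob (projP As G) <= eps -> inner G Sb = 0 ->
     forall S, Sstar C As b S -> `|inner G S| <= frob (S - Sb) * eps) /\
  (frob (projPperp As G) <= eps -> inner G Xb = 0 ->
     forall X, Xstar C As b X -> `|inner G X| <= frob (X - Xb) * eps).
Proof.
move=> sC sA surj _ Xb Sb G eps [yxb [Sxb [HXb1 _ [sXb _] _ _]]] [Xsb [yb [_ HSb2 _ [sSb _] _]]] sG eps0.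
split.
- move=> hP hG S [XS [y [_ HS2 _ [sS _] _]]].
  have D : S - Sb = opAt As (yb - y).
    have eS : S = C - opAt As y by rewrite -HS2 addrAC subrr add0r.
    have eSb : Sb = C - opAt As yb by rewrite -HSb2 addrAC subrr add0r.
    rewrite eS eSb opAtB opprB addrC addrA subrK.
    by rewrite addrC.
  have E : inner G S = inner (projP As G) (S - Sb).
    have -> : inner G S = inner G (S - Sb) by rewrite innerBr hG subr0.
    rewrite [LHS]innerC [RHS]innerC D !inner_opAt; apply: eq_bigr => i _.
    congr (_ * _).
    have : opA As (projP As G) = opA As G.
      by rewrite /projP opA_opAt mulmxA mulmxV ?mul1mx //; exact: gram_unit.
    move/(congr1 (fun w : 'cV[R]_m => w i 0)); rewrite !mxE => ->; done.
  rewrite E; apply: le_trans; first exact: (@cs_inner _ _ _ _ (@symmxB _ _ _ _ sS sSb)).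
  by rewrite mulrC ler_wpM2l // frob_ge0.
- move=> hP hX X [yx [Sx [HX1 _ [sX _] _ _]]].
  have E : inner G X = inner (projPperp As G) (X - Xb).
    have -> : inner G X = inner G (X - Xb) by rewrite innerBr hX subr0.
    rewrite -{1}(subrK (projP As G) G) innerDl.
    have -> : inner (projP As G) (X - Xb) = 0.
      rewrite /projP inner_opAt big1 // => i _.
      have : opA As (X - Xb) = 0 by rewrite opAB HX1 HXb1 subrr.
      move/(congr1 (fun w : 'cV[R]_m => w i 0)); rewrite !mxE => ->; by rewrite mulr0.
    by rewrite addr0.
  rewrite E; apply: le_trans; first exact: (@cs_inner _ _ _ _ (@symmxB _ _ _ _ sX sXb)).
  by rewrite mulrC ler_wpM2l // frob_ge0.
Qed.
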